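(* Let $E\subseteq\mathbb{R}$, and let $\mathbf{AC}(E)$ be the set of Abel continuous functions on $E$, regarded as a subset of the space of all continuous real functions on $E$ equipped with the topology of uniform convergence on $E$. Then $\mathbf{AC}(E)$ is closed: if $f$ is a continuous function on $E$ and there is a sequence $(f_n)$ in $\mathbf{AC}(E)$ converging uniformly on $E$ to $f$, then $f\in\mathbf{AC}(E)$.
   Context: A sequence $(p_n)_{n\ge0}$ is Abel convergent to $\ell$ if $\sum_{k=0}^{\infty}p_k x^k$ converges for every $0\le x<1$ and $\lim_{x\to 1^-}(1-x)\sum_{k=0}^{\infty}p_k x^k=\ell$. A function $g:E\to\mathbb{R}$ is Abel continuous on $E$ if for every sequence $(p_n)$ in $E$ Abel convergent to some $\ell\in E$, $(g(p_n))$ is Abel convergent to $g(\ell)$. *)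

(* Defs.v *)
From Stdlib Require Import Reals.
From Coquelicot Require Import Coquelicot.
Open Scope R_scope.

Definition abel_convergent (p : nat -> R) (l : R) : Prop :=
  (forall x : R, 0 <= x < 1 -> ex_series (fun k => p k * x ^ k)) /\
  filterlim (fun x => (1 - x) * Series (fun k => p k * x ^ k))
            (at_left 1) (locally l).

Definition abel_continuous (E : R -> Prop) (g : R -> R) : Prop :=
  forall (p : nat -> R) (l : R),
    (forall n, E (p n)) -> E l -> abel_convergent p l ->
    abel_convergent (fun n => g (p n)) (g l).

Definition unif_conv_on (E : R -> Prop) (fn : nat -> R -> R) (f : R -> R) : Prop :=
  forall eps : R, 0 < eps -> exists N : nat,
    forall n x, (N <= n)%nat -> E x -> Rabs (fn n x - f x) < eps.

(* Main.v *)
Require Import Defs.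
From Stdlib Require Import Reals Lra.
From Coquelicot Require Import Coquelicot.
Open Scope R_scope.

Lemma geom_bound (d : nat -> R) (e x : R) :
  (forall k, Rabs (d k) <= e) -> 0 <= x < 1 ->
  ex_series (fun k => d k * x ^ k) /\
  Rabs ((1 - x) * Series (fun k => d k * x ^ k)) <= e.
Proof.
  intros Hd Hx.
  assert (Hg : is_series (fun k => x ^ k) (/ (1 - x))).
  { apply is_series_geom. rewrite Rabs_pos_eq; lra. }
  assert (Heg : ex_series (fun k => e * x ^ k)).
  { exists (e * / (1 - x)). apply (is_series_scal_l e _ _ Hg). }
  assert (Hle : forall k, Rabs (d k * x ^ k) <= e * x ^ k).
  { intro k. rewrite Rabs_mult, (Rabs_pos_eq (x ^ k)) by (apply pow_le; lra).
    apply Rmult_le_compat_r; [apply pow_le; lra| apply Hd]. }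
  assert (Habs : ex_series (fun k => Rabs (d k * x ^ k))).
  { apply (@ex_series_le R_AbsRing R_CompleteNormedModule _ (fun k => e * x ^ k)); auto.
    intro k. unfold norm; simpl; unfold abs; simpl. rewrite Rabs_Rabsolu. apply Hle. }
  split. { now apply ex_series_Rabs. }
  assert (H1 : Rabs (Series (fun k => d k * x ^ k)) <= e * / (1 - x)).
  { eapply Rle_trans. apply Series_Rabs; auto.
    rewrite <- (is_series_unique _ _ Hg), <- Series_scal_l.
    apply Series_le; auto. intro k; split; [apply Rabs_pos|apply Hle]. }
  rewrite Rabs_mult, (Rabs_pos_eq (1 - x)) by lra.
  apply Rle_trans with ((1 - x) * (e * / (1 - x))).
  apply Rmult_le_compat_l; lra.
  right. field. lra.
Qed.

Theorem theorem9 (E : R -> Prop) (f : R -> R) (fn : nat -> R -> R) :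
  continuous_on E f ->
  (forall n, continuous_on E (fn n)) ->
  (forall n, abel_continuous E (fn n)) ->
  unif_conv_on E fn f ->
  abel_continuous E f.
Proof.
  intros _ _ Hac Hu p l Hp Hl Habel.
  destruct (Hu 1 Rlt_0_1) as [N1 HN1].
  assert (Hdiff : forall n x, (N1 <= n)%nat -> E x -> Rabs (f x - fn n x) <= 1).
  { intros n x Hn Hx. rewrite Rabs_minus_sym. left; auto. }
  assert (Hex : forall n, (N1 <= n)%nat -> forall x, 0 <= x < 1 ->
     ex_series (fun k => f (p k) * x ^ k) /\
     Series (fun k => f (p k) * x ^ k) =
       Series (fun k => fn n (p k) * x ^ k) +
       Series (fun k => (f (p k) - fn n (p k)) * x ^ k)).
  { intros n Hn x Hx.
    destruct (Hac n p l Hp Hl Habel) as [Hs _].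
    destruct (geom_bound (fun k => f (p k) - fn n (p k)) 1 x) as [Hd _]; auto.
    assert (Heq : forall k, f (p k) * x ^ k = fn n (p k) * x ^ k + (f (p k) - fn n (p k)) * x ^ k)
      by (intro; ring).
    split.
    - eapply ex_series_ext. intro k; symmetry; apply Heq.
      apply (@ex_series_plus R_AbsRing R_NormedModule); auto.
    - rewrite <- Series_plus; auto. apply Series_ext; auto. }
  split.
  { intros x Hx. apply (Hex N1 (le_n _) x Hx). }
  apply filterlim_locally. intros eps.
  set (e3 := eps / 3).
  assert (He3 : 0 < e3) by (unfold e3; destruct eps; simpl; lra).
  destruct (Hu e3 He3) as [N2 HN2].
  set (n := Nat.max N1 N2).
  assert (Hn1 : (N1 <= n)%nat) by apply Nat.le_max_l.
  assert (Hn2 : (N2 <= n)%nat) by apply Nat.le_max_r.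
  destruct (Hac n p l Hp Hl Habel) as [_ Hlim].
  pose proof (proj1 (filterlim_locally (F := at_left 1) _ _) Hlim) as Hlim2; clear Hlim; rename Hlim2 into Hlim.
  specialize (Hlim (mkposreal e3 He3)).
  assert (H01 : at_left 1 (fun x => 0 <= x < 1)).
  { exists (mkposreal 1 Rlt_0_1). intros y Hy Hlt.
    unfold ball in Hy; simpl in Hy; unfold AbsRing_ball, abs, minus, plus, opp in Hy; simpl in Hy.
    apply Rabs_lt_between in Hy. lra. }
  generalize (filter_and _ _ Hlim H01). apply filter_imp.
  intros x [Hb Hx].
  unfold ball in Hb |- *; simpl in Hb |- *; unfold AbsRing_ball, abs, minus, plus, opp in Hb |- *; simpl in Hb |- *.
  destruct (Hex n Hn1 x Hx) as [_ ->].
  destruct (geom_bound (fun k => f (p k) - fn n (p k)) e3 x) as [_ Hd]; auto.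
  { intro k. rewrite Rabs_minus_sym. left; auto. }
  assert (Hl3 : Rabs (fn n l - f l) < e3) by auto.
  set (A := Series (fun k => fn n (p k) * x ^ k)) in *.
  set (B := Series (fun k => (f (p k) - fn n (p k)) * x ^ k)) in *.
  replace ((1 - x) * (A + B) + - f l) with
    (((1 - x) * A + - fn n l) + (1 - x) * B + (fn n l - f l)) by ring.
  eapply Rle_lt_trans. apply Rabs_triang.
  eapply Rle_lt_trans. apply Rplus_le_compat_r. apply Rabs_triang.
  unfold e3 in *. lra.
Qed.
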